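(* Let $H_0,H_1$ be complex Hilbert spaces, $G$ a densely defined closed operator from $H_0$ into $H_1$ and $D$ a densely defined closed operator from $H_1$ into $H_0$ with $-G^*\subset D$. Let $a\in\mathcal L(H_1)$ and $m\in\mathcal L(H_0)$ be coercive and let $u_0\in\mathrm{BD}(G)$. Then there exists a unique $u\in\mathrm{dom}(DaG)$ such that $mu-DaGu=0$ and $u-u_0\in\mathrm{dom}(\mathring G)$.
   Context: $\mathring G=-D^*$, $\mathring D=-G^*$. Domains carry graph inner products, e.g. $(u,v)_{\mathrm{dom}(G)}=(u,v)_{H_0}+(Gu,Gv)_{H_1}$. $\mathrm{BD}(G)$ is the orthogonal complement of $\mathrm{dom}(\mathring G)$ in $\mathrm{dom}(G)$. $\mathrm{dom}(DaG)=\{u\in\mathrm{dom}(G):aGu\in\mathrm{dom}(D)\}$. A bounded operator $M$ is coercive if $\mathrm{Re}(Mx,x)\ge\mu\|x\|^2$ for some $\mu>0$ and all $x$. *)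

(* Defs.v *)
From HB Require Import structures.
From mathcomp Require Import all_boot all_order all_algebra.
From mathcomp Require Import reals complex.
Set Implicit Arguments. Unset Strict Implicit. Unset Printing Implicit Defensive.
Import Order.TTheory GRing.Theory Num.Theory.
Local Open Scope ring_scope.

Definition is_inner_product (R : realType) (V : lmodType R[i])
    (ip : V -> V -> R[i]) : Prop :=
  [/\ (forall (c : R[i]) (x y z : V), ip (c *: x + y) z = c * ip x z + ip y z),
      (forall x y : V, ip y x = (ip x y)^*),
      (forall x : V, 0 <= ip x x) &
      (forall x : V, ip x x = 0 -> x = 0)].

Definition ipnorm (R : realType) (V : lmodType R[i]) (ip : V -> V -> R[i])
    (x : V) : R[i] := sqrtC (ip x x).

Definition ip_cvg (R : realType) (V : lmodType R[i]) (ip : V -> V -> R[i])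
    (u : nat -> V) (l : V) : Prop :=
  forall eps : R[i], 0 < eps -> exists N : nat, forall n : nat, (N <= n)%N ->
    ipnorm ip (u n - l) < eps.

Definition ip_cauchy (R : realType) (V : lmodType R[i]) (ip : V -> V -> R[i])
    (u : nat -> V) : Prop :=
  forall eps : R[i], 0 < eps -> exists N : nat, forall m n : nat,
    (N <= m)%N -> (N <= n)%N -> ipnorm ip (u m - u n) < eps.

Record hilbert (R : realType) := Hilbert {
  hcarrier :> lmodType R[i];
  hinner : hcarrier -> hcarrier -> R[i];
  hinner_ax : is_inner_product hinner;
  hcomplete : forall u : nat -> hcarrier, ip_cauchy hinner u ->
                exists l, ip_cvg hinner u l
}.
Arguments hinner {R} h _ _.

Notation "'<<' x , y '>_' H" := (hinner H x y) (at level 0, format "'<<' x ,  y '>_' H").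
Notation "'||' x '||_' H" := (ipnorm (hinner H) x) (at level 0, format "'||' x '||_' H").

(* A (possibly unbounded) operator T from H0 to H1 is a pair (dom, T) with
   dom a linear subspace of H0 and T : H0 -> H1 linear on dom (values of T
   outside dom are irrelevant). *)
Definition is_operator (R : realType) (H0 H1 : hilbert R)
    (dom : H0 -> Prop) (T : H0 -> H1) : Prop :=
  [/\ dom 0,
      (forall (c : R[i]) (x y : H0), dom x -> dom y -> dom (c *: x + y)) &
      (forall (c : R[i]) (x y : H0), dom x -> dom y ->
         T (c *: x + y) = c *: T x + T y)].

Definition densely_defined (R : realType) (H0 : hilbert R)
    (dom : H0 -> Prop) : Prop :=
  forall (x : H0) (eps : R[i]), 0 < eps -> exists y : H0, dom y /\ ||x - y||_H0 < eps.

Definition closed_operator (R : realType) (H0 H1 : hilbert R)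
    (dom : H0 -> Prop) (T : H0 -> H1) : Prop :=
  forall (u : nat -> H0) (x : H0) (y : H1),
    (forall n, dom (u n)) -> ip_cvg (hinner H0) u x ->
    ip_cvg (hinner H1) (fun n => T (u n)) y ->
    dom x /\ T x = y.

Definition densely_defined_closed (R : realType) (H0 H1 : hilbert R)
    (dom : H0 -> Prop) (T : H0 -> H1) : Prop :=
  [/\ is_operator dom T, densely_defined dom & closed_operator dom T].

(* Adjoint T^* : H1 -> H0 of (dom, T) : H0 -> H1, described by its graph:
   y \in dom(T^* ) with T^* y = z  iff  <T x, y> = <x, z> for all x in dom. *)
Definition adjoint_graph (R : realType) (H0 H1 : hilbert R)
    (dom : H0 -> Prop) (T : H0 -> H1) (y : H1) (z : H0) : Prop :=
  forall x : H0, dom x -> << T x, y >_H1 = << x, z >_H0.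

Definition adjoint_dom (R : realType) (H0 H1 : hilbert R)
    (dom : H0 -> Prop) (T : H0 -> H1) (y : H1) : Prop :=
  exists z : H0, adjoint_graph dom T y z.

(* operator inclusion  -T^* \subset S  (S : H1 -> H0 with domain domS) *)
Definition neg_adjoint_sub (R : realType) (H0 H1 : hilbert R)
    (domT : H0 -> Prop) (T : H0 -> H1) (domS : H1 -> Prop) (S : H1 -> H0) : Prop :=
  forall (y : H1) (z : H0), adjoint_graph domT T y z -> domS y /\ S y = - z.

(* dom(\mathring G) where \mathring G = - D^*  *)
Definition dom_Gring (R : realType) (H0 H1 : hilbert R)
    (domD : H1 -> Prop) (D : H1 -> H0) : H0 -> Prop :=
  adjoint_dom domD D.

(* BD(G): orthogonal complement of dom(\mathring G) in dom(G), w.r.t. the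
   graph inner product (u,v)_{dom G} = (u,v)_{H0} + (Gu,Gv)_{H1}. *)
Definition BD (R : realType) (H0 H1 : hilbert R)
    (domG : H0 -> Prop) (G : H0 -> H1) (domD : H1 -> Prop) (D : H1 -> H0)
    (u : H0) : Prop :=
  domG u /\ forall v : H0, dom_Gring domD D v ->
    << u, v >_H0 + << G u, G v >_H1 = 0.

Definition dom_DaG (R : realType) (H0 H1 : hilbert R)
    (domG : H0 -> Prop) (G : H0 -> H1) (domD : H1 -> Prop) (a : H1 -> H1)
    (u : H0) : Prop :=
  domG u /\ domD (a (G u)).

Definition bounded_linear (R : realType) (H : hilbert R) (M : H -> H) : Prop :=
  (forall (c : R[i]) (x y : H), M (c *: x + y) = c *: M x + M y) /\
  exists C : R[i], 0 <= C /\ forall x : H, ||M x||_H <= C * ||x||_H.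

Definition coercive (R : realType) (H : hilbert R) (M : H -> H) : Prop :=
  bounded_linear M /\
  exists mu : R[i], 0 < mu /\ forall x : H, mu * ||x||_H ^+ 2 <= 'Re << M x, x >_H.

(* Main.v *)
Require Import Defs.
From mathcomp Require Import all_boot all_order all_algebra.
From mathcomp Require Import reals complex classical_sets.
From mathcomp Require Import ring lra.
From Stdlib Require Import ClassicalEpsilon FunctionalExtensionality.
Import Order.TTheory GRing.Theory Num.Theory.
Local Open Scope ring_scope.

Section Cx.
Variable R : realType.
Lemma ge0C (z : R[i]) : 0 <= z -> z = (complex.Re z)%:C%C /\ 0 <= complex.Re z.
Proof. case: z => a b; rewrite lecE /= => /andP[/eqP -> h]. by split. Qed.
Lemma conjRe (z : R[i]) : complex.Re (z^*) = complex.Re z.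
Proof. by case: z. Qed.
Lemma conjRC (t : R) : (t%:C%C : R[i])^* = t%:C%C.
Proof. exact: conjc_real. Qed.
Lemma ReM_real (t : R) (z : R[i]) : complex.Re (t%:C%C * z) = t * complex.Re z.
Proof. case: z => a b /=. by rewrite mul0r subr0. Qed.
Lemma ReN (z : R[i]) : complex.Re (- z) = - complex.Re z.
Proof. by case: z. Qed.
Lemma ReD (z w : R[i]) : complex.Re (z + w) = complex.Re z + complex.Re w.
Proof. by case: z; case: w. Qed.
Lemma ii : (Complex (0:R) 1) * (Complex (0:R) 1)^* = 1.
Proof. change (Complex (0:R) 1 * conjc (Complex 0 1) = 1). simpc. reflexivity. Qed.
Lemma Rei (c : R[i]) : complex.Re (Complex 0 1 * c) = - complex.Im c.
Proof. case: c => a b. simpc. by []. Qed.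
Lemma Remi (c : R[i]) : complex.Re (- (Complex 0 1 * c)) = complex.Im c.
Proof. case: c => a b. simpc. by []. Qed.
Lemma complex_eq0 (c : R[i]) : complex.Re c = 0 -> complex.Im c = 0 -> c = 0.
Proof. by case: c => a b /= -> ->. Qed.
End Cx.
Arguments ii {R}.
Arguments Rei {R} c.
Arguments Remi {R} c.
Arguments complex_eq0 {R} c.
Arguments ge0C {R} z.
Arguments conjRe {R} z.
Arguments conjRC {R} t.
Arguments ReM_real {R} t z.
Arguments ReN {R} z.
Arguments ReD {R} z w.

Section Pre.
Variable R : realType.
Variable V : lmodType R[i].
Variable ip : V -> V -> R[i].
Hypothesis ipD : forall c x y z, ip (c *: x + y) z = c * ip x z + ip y z.
Hypothesis ipC : forall x y, ip y x = (ip x y)^*.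
Hypothesis ipP : forall x, 0 <= ip x x.

Lemma ipDl x y z : ip (x + y) z = ip x z + ip y z.
Proof. by have := ipD 1 x y z; rewrite scale1r mul1r. Qed.
Lemma ip0l z : ip 0 z = 0.
Proof. have h := ipDl 0 0 z; rewrite addr0 in h.
by apply: (addrI (ip 0 z)); rewrite -h addr0. Qed.
Lemma ipZl c x z : ip (c *: x) z = c * ip x z.
Proof. by have := ipD c x 0 z; rewrite addr0 ip0l addr0. Qed.
Lemma ipNl x z : ip (- x) z = - ip x z.
Proof. by rewrite -scaleN1r ipZl mulN1r. Qed.
Lemma ipBl x y z : ip (x - y) z = ip x z - ip y z.
Proof. by rewrite ipDl ipNl. Qed.
Lemma ipDr z x y : ip z (x + y) = ip z x + ip z y.
Proof. by rewrite (ipC (x + y) z) (ipC x z) (ipC y z) ipDl rmorphD. Qed.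
Lemma ipZr z c x : ip z (c *: x) = c^* * ip z x.
Proof. by rewrite (ipC (c *: x) z) (ipC x z) ipZl rmorphM. Qed.
Lemma ip0r z : ip z 0 = 0.
Proof. by rewrite (ipC 0 z) ip0l rmorph0. Qed.
Lemma ipNr z x : ip z (- x) = - ip z x.
Proof. by rewrite (ipC (- x) z) (ipC x z) ipNl rmorphN. Qed.
Lemma ipBr z x y : ip z (x - y) = ip z x - ip z y.
Proof. by rewrite ipDr ipNr. Qed.

Definition n2 x := complex.Re (ip x x).
Lemma ipxx x : ip x x = (n2 x)%:C%C.
Proof. exact: (ge0C _ (ipP x)).1. Qed.
Lemma n2_ge0 x : 0 <= n2 x.
Proof. exact: (ge0C _ (ipP x)).2. Qed.
Lemma Re_ipC x y : complex.Re (ip y x) = complex.Re (ip x y).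
Proof. by rewrite ipC conjRe. Qed.
Lemma n2D x y : n2 (x + y) = n2 x + n2 y + 2 * complex.Re (ip x y).
Proof. rewrite /n2 ipDl !ipDr !ReD (Re_ipC y x). ring. Qed.
Lemma ReipZl t x y : complex.Re (ip (t%:C%C *: x) y) = t * complex.Re (ip x y).
Proof. by rewrite ipZl ReM_real. Qed.
Lemma ReipNr x y : complex.Re (ip x (- y)) = - complex.Re (ip x y).
Proof. by rewrite ipNr ReN. Qed.
Lemma n2N x : n2 (- x) = n2 x.
Proof. by rewrite /n2 ipNl ipNr opprK. Qed.
Lemma n2Zr t x : n2 (t%:C%C *: x) = t ^+ 2 * n2 x.
Proof. by rewrite /n2 ipZl ipZr conjRC mulrA -rmorphM ReM_real expr2. Qed.
Lemma n20 : n2 0 = 0.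
Proof. by rewrite /n2 ip0l. Qed.
Lemma ReipB t x y : 2 * t * complex.Re (ip x y) <= t ^+ 2 * n2 x + n2 y.
Proof.
have := n2_ge0 (t%:C%C *: x - y).
rewrite n2D n2Zr n2N ReipNr ReipZl. nra.
Qed.
Lemma n2B x y : n2 (x - y) = n2 x + n2 y - 2 * complex.Re (ip x y).
Proof. rewrite n2D n2N ReipNr. ring. Qed.
Lemma n2_le2 x y : n2 (x + y) <= 2 * n2 x + 2 * n2 y.
Proof.
have := n2_ge0 (x - y); rewrite n2B n2D. lra.
Qed.
Lemma n2Zi x : n2 (Complex 0 1 *: x) = n2 x.
Proof. by rewrite /n2 ipZl ipZr mulrA ii mul1r. Qed.

Definition cvgR (u : nat -> V) l := forall e : R, 0 < e ->
  exists N, forall n, (N <= n)%N -> n2 (u n - l) < e.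
Definition cauchyR (u : nat -> V) := forall e : R, 0 < e ->
  exists N, forall m n, (N <= m)%N -> (N <= n)%N -> n2 (u m - u n) < e.
Definition closedR (S : V -> Prop) := forall u l,
  (forall n, S (u n)) -> cvgR u l -> S l.
Definition subsp (S : V -> Prop) :=
  S 0 /\ forall c x y, S x -> S y -> S (c *: x + y).

Lemma cvg_cauchy u l : cvgR u l -> cauchyR u.
Proof.
move=> h e e0; have [N hN] := h (e / 4) ltac:(lra).
exists N => m n hm hn.
have -> : u m - u n = (u m - l) + - (u n - l) by rewrite opprB addrA subrK.
apply: le_lt_trans (n2_le2 _ _) _; rewrite n2N.
have := hN m hm; have := hN n hn. lra.
Qed.

Lemma Re_small q r : (forall e, 0 < e -> exists w, n2 w < e /\ complex.Re (ip w q) = r) ->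
  r <= 0.
Proof.
move=> h; rewrite leNgt; apply/negP => r0.
have K0 : 0 < n2 q + 1 by have := n2_ge0 q; lra.
set eps := r / (n2 q + 1).
have e0 : 0 < eps by rewrite divr_gt0.
have eK : eps * (n2 q + 1) = r by rewrite /eps divfK // gt_eqF.
have [w [hw hr]] := h (eps ^+ 2) ltac:(by rewrite exprn_gt0).
have := ReipB eps q w; rewrite Re_ipC hr.
nra.
Qed.

Lemma ip_small q c : (forall e, 0 < e -> exists w, n2 w < e /\ ip w q = c) -> c = 0.
Proof.
move=> h; apply: complex_eq0.
- apply/eqP; rewrite eq_le; apply/andP; split.
  + apply: (Re_small q) => e e0; have [w [hw hc]] := h e e0.
    by exists w; rewrite hc.
  + rewrite -oppr_le0; apply: (Re_small q) => e e0; have [w [hw hc]] := h e e0.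
    by exists (- w); rewrite n2N ipNl hc ReN.
- apply/eqP; rewrite eq_le; apply/andP; split.
  + apply: (Re_small q) => e e0; have [w [hw hc]] := h e e0.
    exists (- (Complex 0 1 *: w)); rewrite n2N n2Zi ipNl ipZl hc Remi; by [].
  + rewrite -oppr_le0; apply: (Re_small q) => e e0; have [w [hw hc]] := h e e0.
    by exists (Complex 0 1 *: w); rewrite n2Zi ipZl hc Rei.
Qed.

Lemma quad_zero (N r : R) : 0 <= N -> (forall t, 0 <= t ^+ 2 * N - 2 * t * r) -> r = 0.
Proof.
move=> N0 h; set t := r / (N + 1).
have N1 : N + 1 != 0 by rewrite gt_eqF //; lra.
have ht : t * (N + 1) = r by rewrite /t divfK.
have h2 := h t.
have : t = 0 by nra.
by move=> t0; rewrite -ht t0 mul0r.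
Qed.

Definition ivn (n : nat) : R := 1 / (n.+1)%:R.
Lemma ivn_gt0 n : 0 < ivn n.
Proof. by rewrite /ivn divr_gt0 // ltr0n. Qed.

Lemma inv_small (e : R) : 0 < e -> exists N : nat, forall n : nat, (N <= n)%N -> ivn n < e.
Proof.
rewrite /ivn; move=> e0; exists (Num.bound (1 / e)) => n hn.
have hb := archi_boundP (ltW (divr_gt0 ltr01 e0)).
have h1 : (Num.bound (1 / e))%:R <= (n.+1)%:R :> R by by rewrite ler_nat; apply: leqW.
have np : 0 < (n.+1)%:R :> R by rewrite ltr0n.
rewrite ltr_pdivrMr // -ltr_pdivrMl //. lra.
Qed.

Lemma choice_nat (T : Type) (P : nat -> T -> Prop) : (forall n, exists k, P n k) ->
  exists f : nat -> T, forall n, P n (f n).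
Proof.
move=> h; exists (fun n => proj1_sig (constructive_indefinite_description _ (h n))).
move=> n; exact: (proj2_sig (constructive_indefinite_description _ (h n))).
Qed.

Lemma le_eps (a b : R) : (forall e, 0 < e -> a < b + e) -> a <= b.
Proof.
move=> h; rewrite leNgt; apply/negP => ab.
have := h ((a - b) / 2) ltac:(lra). lra.
Qed.

Hypothesis ipDef : forall x, ip x x = 0 -> x = 0.
Hypothesis cpl : forall u, cauchyR u -> exists l, cvgR u l.

Lemma n2_eq0 x : n2 x = 0 -> x = 0.
Proof. by move=> h; apply: ipDef; rewrite ipxx h. Qed.

Lemma n2_split (t : R) y z : 0 < t -> t * n2 (y + z) <= t * (1 + t) * n2 y + (t + 1) * n2 z.
Proof.
move=> t0; have := ReipB t y z; rewrite n2D. have := n2_ge0 y; have := n2_ge0 z. nra.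
Qed.

Lemma ReipZr x t y : complex.Re (ip x (t%:C%C *: y)) = t * complex.Re (ip x y).
Proof. by rewrite ipZr conjRC ReM_real. Qed.

Theorem projection (S : V -> Prop) : subsp S -> closedR S -> forall x,
  exists k, S k /\ forall s, S s -> ip (x - k) s = 0.
Proof.
move=> [S0 SD] cS x.
have SA : forall a b, S a -> S b -> S (a + b).
  by move=> a b Sa Sb; rewrite -[a]scale1r; apply: (SD).
have SZ : forall c a, S a -> S (c *: a).
  by move=> c a Sa; rewrite -[_ *: _]addr0; apply: (SD).
pose E := fun r : R => exists k, S k /\ r = - n2 (x - k).
have hsup : has_sup E.
  split; first by exists (- n2 (x - 0)), 0.
  exists 0 => y [k [_ ->]]; rewrite oppr_le0; exact: n2_ge0.
set d := - sup E.
have lowb : forall k, S k -> d <= n2 (x - k).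
  move=> k Sk; rewrite /d lerNl; apply: sup_upper_bound => //; by exists k.
have d0 : 0 <= d.
  rewrite /d oppr_ge0; apply: ge_sup; first by exists (- n2 (x - 0)), 0.
  move=> y [k [_ ->]]; rewrite oppr_le0; exact: n2_ge0.
have appr : forall n : nat, exists k, S k /\ n2 (x - k) < d + ivn n.
  move=> n; have [e [k [Sk ->]] he] := sup_adherent (E := E) (eps := ivn n)
    (ivn_gt0 n) hsup.
  exists k; split => //; rewrite /d; move: he; by rewrite -ltrN2 opprD opprK opprK.
have [kf hkf] := choice_nat _ _ appr.
have Skf n : S (kf n) by case: (hkf n).
have Akf n : n2 (x - kf n) < d + ivn n by case: (hkf n).
have hc : cauchyR kf.
  move=> e e0; have [N hN] := inv_small (e / 4) ltac:(lra).
  exists N => m n hm hn.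
  pose h := (2^-1 : R)%:C%C.
  pose mid := h *: (kf m + kf n).
  have Smid : S mid by rewrite /mid; apply/SZ/SA.
  have hh : h + h = 1.
    rewrite /h -rmorphD /=; congr (_%:C%C); by field.
  have emid : x - mid = h *: ((x - kf m) + (x - kf n)).
    rewrite /mid !scalerDr !scalerN addrACA -scalerDl hh scale1r. 
    by rewrite opprD.
  have par := n2_ge0 ((x - kf m) - (x - kf n)).
  have l1 := lowb mid Smid.
  rewrite emid n2Zr in l1.
  have e1 : (x - kf m) - (x - kf n) = - (kf m - kf n).
    by rewrite opprB addrC addrA subrK opprB.
  have := n2B (x - kf m) (x - kf n); have := n2D (x - kf m) (x - kf n).
  rewrite e1 n2N => eD eB.
  have := Akf m; have := Akf n; have := hN m hm; have := hN n hn.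
  have q5 : ((2^-1 : R) ^+ 2) = 4^-1 by rewrite expr2 -invfM; congr (_^-1); ring.
  rewrite q5 in l1.
  move=> q1 q2 q3 q4.
  have i1 := ivn_gt0 m.
  have i2 := ivn_gt0 n.
  lra.
have [k hk] := cpl kf hc.
have Sk : S k := cS _ _ Skf hk.
have mink : n2 (x - k) <= d.
  apply: le_eps => eta eta0.
  set t := eta / (2 * (d + 2)).
  have t0 : 0 < t by rewrite /t divr_gt0 //; lra.
  have tE : t * (2 * (d + 2)) = eta by rewrite /t divfK // gt_eqF //; lra.
  have [N1 hN1] := inv_small (Num.min 1 (eta / 4)) ltac:(by rewrite lt_min ltr01; lra).
  have [N2 hN2] := hk (eta * t / (4 * (t + 1))) ltac:(by rewrite divr_gt0 //; nra).
  pose n := maxn N1 N2.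
  have := hN1 n (leq_maxl _ _); rewrite lt_min => /andP[r1 r2].
  have := hN2 n (leq_maxr _ _) => r3.
  have e4 : eta * t / (4 * (t + 1)) * (4 * (t + 1)) = eta * t by rewrite divfK // gt_eqF //; lra.
  have := n2_split t (x - kf n) (kf n - k) t0.
  have -> : x - kf n + (kf n - k) = x - k by rewrite addrA subrK.
  rewrite -n2N opprB => sp.
  have := Akf n => a1.
  have i1 := ivn_gt0 n.
  have := n2_ge0 (x - kf n); have := n2_ge0 (k - kf n) => g1 g2.
  nra.
exists k; split => // s Ss.
have reo : forall s, S s -> complex.Re (ip (x - k) s) = 0.
  move=> s' Ss'; apply: (quad_zero (n2 s') _ (n2_ge0 s')) => t.
  have Sts : S (t%:C%C *: s' + k) by apply: (SD).
  have := lowb _ Sts.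
  have -> : x - (t%:C%C *: s' + k) = (x - k) - t%:C%C *: s' by rewrite opprD addrA addrAC.
  rewrite n2B n2Zr ReipZr. lra.
apply: complex_eq0; first exact: reo.
have := reo (Complex 0 1 *: s) ltac:(by rewrite -[_ *: s]addr0; apply: (SD)).
rewrite ipC conjRe ipZl Rei.
rewrite (ipC (x - k) s).
case: (ip (x - k) s) => a b /=. move/eqP. rewrite oppr_eq0 oppr_eq0. by move/eqP.
Qed.

Section Lin.
Variable B : V -> V.
Hypothesis BL : forall c x y, B (c *: x + y) = c *: B x + B y.
Lemma B0 : B 0 = 0.
Proof. have := BL 1 0 0; rewrite !scale1r addr0 => h.
by apply: (addrI (B 0)); rewrite -h addr0. Qed.
Lemma BlinD x y : B (x + y) = B x + B y.
Proof. by have := BL 1 x y; rewrite !scale1r. Qed.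
Lemma BZ c x : B (c *: x) = c *: B x.
Proof. by have := BL c x 0; rewrite !addr0 B0 addr0. Qed.
Lemma BN x : B (- x) = - B x.
Proof. by rewrite -scaleN1r BZ scaleN1r. Qed.
Lemma BB x y : B (x - y) = B x - B y.
Proof. by rewrite BlinD BN. Qed.
End Lin.

Theorem lax_milgram (S : V -> Prop) (B : V -> V) (M mu : R) :
  subsp S -> closedR S ->
  (forall c x y, B (c *: x + y) = c *: B x + B y) ->
  0 <= M -> (forall x, n2 (B x) <= M * n2 x) ->
  0 < mu -> (forall x, mu * n2 x <= complex.Re (ip (B x) x)) ->
  forall y, exists P, S P /\ forall s, S s -> ip (y - B P) s = 0.
Proof.
move=> [S0 SD] cS BL M0 BM mu0 Bc y.
have SA : forall a b, S a -> S b -> S (a + b).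
  by move=> a b Sa Sb; rewrite -[a]scale1r; apply: (SD).
have SZ : forall c a, S a -> S (c *: a).
  by move=> c a Sa; rewrite -[_ *: _]addr0; apply: (SD).
have SN : forall a, S a -> S (- a) by move=> a Sa; rewrite -scaleN1r; apply: SZ.
have SB : forall a b, S a -> S b -> S (a - b) by move=> a b Sa Sb; apply: SA => //; apply: SN.
pose K := fun x => exists P, S P /\ forall s, S s -> ip (x - B P) s = 0.
have K0 : K 0 by exists 0; split => // s _; rewrite (B0 _ BL) subrr ip0l.
have KD : forall c x x', K x -> K x' -> K (c *: x + x').
  move=> c x x' [P [SP hP]] [P' [SP' hP']]; exists (c *: P + P'); split; first exact: SD.
  move=> s Ss; rewrite BL.
  have -> : c *: x + x' - (c *: B P + B P') = c *: (x - B P) + (x' - B P').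
    by rewrite scalerBr opprD addrACA.
  by rewrite ipD hP // hP' // mulr0 addr0.
have KC : closedR K.
  move=> u l Ku hul.
  have [Pf hPf] := choice_nat _ _ Ku.
  have SPf n : S (Pf n) by case: (hPf n).
  have oPf n : forall s, S s -> ip (u n - B (Pf n)) s = 0 by case: (hPf n).
  have hc : cauchyR Pf.
    move=> e e0; have [N hN] := cvg_cauchy _ _ hul (e * mu ^+ 2) ltac:(by rewrite mulr_gt0 // exprn_gt0).
    exists N => m n hm hn.
    set d := Pf m - Pf n.
    have Sd : S d by apply: SB.
    have e1 : ip (u m - u n) d = ip (B d) d.
      have h1 := oPf m d Sd; have h2 := oPf n d Sd.
      have : ip ((u m - B (Pf m)) - (u n - B (Pf n))) d = 0 by rewrite ipBl h1 h2 subrr.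
      have -> : (u m - B (Pf m)) - (u n - B (Pf n)) = (u m - u n) - B d.
        by rewrite /d (BB _ BL) !opprD !opprK addrACA.
      by rewrite ipBl => /eqP; rewrite subr_eq0 => /eqP.
    have c1 := Bc d; rewrite -e1 in c1.
    have c2 := ReipB mu d (u m - u n); rewrite Re_ipC in c2.
    have c3 := hN m n hm hn.
    have c4 := n2_ge0 d.
    have c5 : mu ^+ 2 * n2 d <= n2 (u m - u n) by nra.
    nra.
  have [P hP] := cpl Pf hc.
  have SP : S P := cS _ _ SPf hP.
  exists P; split => // s Ss.
  apply: (ip_small s) => e e0.
  have [N1 hN1] := hul (e / 4) ltac:(lra).
  have [N2 hN2] := hP (e / (4 * (M + 1))) ltac:(by rewrite divr_gt0 //; lra).
  pose n := maxn N1 N2.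
  exists ((l - B P) - (u n - B (Pf n))); split; last by rewrite ipBl oPf // subr0.
  have -> : (l - B P) - (u n - B (Pf n)) = - (u n - l) + B (Pf n - P).
    by rewrite (BB _ BL) !opprD !opprK addrACA [l + _]addrC [- B P + _]addrC.
  apply: le_lt_trans (n2_le2 _ _) _; rewrite n2N.
  have a1 := hN1 n (leq_maxl _ _).
  have a2 := hN2 n (leq_maxr _ _).
  have a3 := BM (Pf n - P).
  have a4 : e / (4 * (M + 1)) * (4 * (M + 1)) = e by rewrite divfK // gt_eqF //; lra.
  have := n2_ge0 (Pf n - P).
  nra.
have [k [Kk ok]] := projection K (conj K0 KD) KC y.
set q := y - k.
have qperp : forall r, (forall s, S s -> ip r s = 0) -> ip q r = 0.
  move=> r hr; apply: ok; exists 0; split => // s Ss; by rewrite (B0 _ BL) subr0 hr.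
have [s0 [Ss0 os0]] := projection S (conj S0 SD) cS q.
have t0 : q - s0 = 0.
  apply: ipDef; rewrite ipBl qperp //.
  rewrite ipC os0 // rmorph0 subrr //.
have Sq : S q by move/eqP: t0; rewrite subr_eq0 => /eqP ->.
have KBq : K (B q) by exists q; split => // s _; rewrite subrr ip0l.
have q0 : q = 0.
  apply: n2_eq0; apply/eqP; rewrite eq_le n2_ge0 andbT.
  have := Bc q; rewrite (ipC q (B q)) ok // rmorph0 => h.
  have : complex.Re (0 : R[i]) = 0 by [].
  move=> z; rewrite z in h. have := n2_ge0 q. nra.
have : y = k by move/eqP: q0; rewrite subr_eq0 => /eqP.
by move=> ->.
Qed.
End Pre.

Arguments n2 {R V} ip x.
Arguments cvgR {R V} ip u l.
Arguments cauchyR {R V} ip u.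
Arguments closedR {R V} ip S.
Arguments subsp {R V} S.
Arguments ipDl {R V ip}. Arguments ip0l {R V ip}. Arguments ipZl {R V ip}.
Arguments ipNl {R V ip}. Arguments ipBl {R V ip}. Arguments ipDr {R V ip}.
Arguments ipZr {R V ip}. Arguments ip0r {R V ip}. Arguments ipNr {R V ip}.
Arguments ipBr {R V ip}. Arguments ipxx {R V ip}. Arguments n2_ge0 {R V ip}.
Arguments n2D {R V ip}. Arguments n2N {R V ip}. Arguments n2_eq0 {R V ip}.
Arguments cvg_cauchy {R V ip}. Arguments projection {R V ip}.
Arguments lax_milgram {R V ip}. Arguments n2_le2 {R V ip}.
Arguments choice_nat {T}.

Section Hil.
Variable R : realType.
Variable H : hilbert R.
Lemma hD : forall c (x y z : H), hinner H (c *: x + y) z = c * hinner H x z + hinner H y z.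
Proof. by case: (hinner_ax H). Qed.
Lemma hC : forall x y : H, hinner H y x = (hinner H x y)^*.
Proof. by case: (hinner_ax H). Qed.
Lemma hP : forall x : H, 0 <= hinner H x x.
Proof. by case: (hinner_ax H). Qed.
Lemma hDef : forall x : H, hinner H x x = 0 -> x = 0.
Proof. by case: (hinner_ax H). Qed.

Lemma sqrtC_real (r : R) : 0 <= r -> sqrtC (r%:C%C) = (Num.sqrt r)%:C%C.
Proof.
move=> r0; rewrite -{1}(sqr_sqrtr r0) rmorphXn sqrCK //.
by rewrite lecR sqrtr_ge0.
Qed.

Lemma ipnormE (x : H) : ipnorm (hinner H) x = (Num.sqrt (n2 (hinner H) x))%:C%C.
Proof. by rewrite /ipnorm (ipxx hP) sqrtC_real // (n2_ge0 hP). Qed.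

Lemma norm_lt (x : H) (e : R) : 0 < e ->
  (ipnorm (hinner H) x < (Num.sqrt e)%:C%C) = (n2 (hinner H) x < e).
Proof. by move=> e0; rewrite ipnormE ltcR ltr_sqrt. Qed.

Lemma cpx_pos (eps : R[i]) : 0 < eps -> eps = (complex.Re eps)%:C%C /\ 0 < complex.Re eps.
Proof. by case: eps => a b; rewrite ltcE /= => /andP[/eqP -> h]. Qed.

Lemma sqrt_sq (r : R) : 0 <= r -> Num.sqrt (r ^+ 2) = r.
Proof. by move=> r0; rewrite sqrtr_sqr ger0_norm. Qed.

Lemma cvg_from (u : nat -> H) l : ip_cvg (hinner H) u l -> cvgR (hinner H) u l.
Proof.
move=> h e e0; have [N hN] := h ((Num.sqrt e)%:C%C) ltac:(by rewrite ltcR sqrtr_gt0).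
by exists N => n hn; rewrite -(norm_lt _ _ e0); exact: hN.
Qed.

Lemma cvg_to (u : nat -> H) l : cvgR (hinner H) u l -> ip_cvg (hinner H) u l.
Proof.
move=> h eps /cpx_pos [epsE e0]; rewrite epsE; move: (complex.Re eps) e0 => r e0.
have [N hN] := h (r ^+ 2) ltac:(by rewrite exprn_gt0).
exists N => n hn; rewrite -(sqrt_sq _ (ltW e0)) norm_lt ?exprn_gt0 //; exact: hN.
Qed.

Lemma cauchy_to (u : nat -> H) : cauchyR (hinner H) u -> ip_cauchy (hinner H) u.
Proof.
move=> h eps /cpx_pos [epsE e0]; rewrite epsE; move: (complex.Re eps) e0 => r e0.
have [N hN] := h (r ^+ 2) ltac:(by rewrite exprn_gt0).
exists N => m n hm hn; rewrite -(sqrt_sq _ (ltW e0)) norm_lt ?exprn_gt0 //; exact: hN.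
Qed.

Lemma hcpl (u : nat -> H) : cauchyR (hinner H) u -> exists l, cvgR (hinner H) u l.
Proof.
move=> /cauchy_to h; have [l hl] := hcomplete h.
by exists l; apply: cvg_from.
Qed.

Lemma bnd_conv (M : H -> H) : bounded_linear M ->
  (forall c x y, M (c *: x + y) = c *: M x + M y) /\
  exists K : R, 0 <= K /\ forall x, n2 (hinner H) (M x) <= K * n2 (hinner H) x.
Proof.
move=> [lin [C [C0 hC']]]; split => //.
have [CE Cr] := ge0C _ C0; set c := complex.Re C in CE Cr.
exists (c ^+ 2); split; first by rewrite exprn_ge0.
move=> x; have := hC' x; rewrite !ipnormE CE -rmorphM lecR => h.
have a1 := sqr_sqrtr (n2_ge0 hP (M x)); have a2 := sqr_sqrtr (n2_ge0 hP x).
have s1 := sqrtr_ge0 (n2 (hinner H) (M x)); have s2 := sqrtr_ge0 (n2 (hinner H) x).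
rewrite -a1 -a2. nra.
Qed.

Lemma coer_conv (M : H -> H) : coercive M ->
  (forall c x y, M (c *: x + y) = c *: M x + M y) /\
  (exists K : R, 0 <= K /\ forall x, n2 (hinner H) (M x) <= K * n2 (hinner H) x) /\
  exists mu : R, 0 < mu /\ forall x, mu * n2 (hinner H) x <= complex.Re (hinner H (M x) x).
Proof.
move=> [/bnd_conv [lin bnd] [mu [mu0 hmu]]]; split => //; split => //.
have [muE m0] := cpx_pos _ mu0.
exists (complex.Re mu); split => // x; have := hmu x.
by rewrite /ipnorm sqrtCK (ipxx hP) {1}muE -rmorphM -complexRe lecR.
Qed.
End Hil.
Arguments hD {R H}. Arguments hC {R H}. Arguments hP {R H}. Arguments hDef {R H}.
Arguments hcpl {R H}.
Arguments cvg_to {R H u l}. Arguments cvg_from {R H u l}.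
Arguments bnd_conv {R H M}. Arguments coer_conv {R H M}.

Section Prod.
Variable R : realType.
Variables H K : hilbert R.
Definition ipP (p q : (H * K)%type) : R[i] := hinner H p.1 q.1 + hinner K p.2 q.2.
Lemma pD : forall c (x y z : (H * K)%type), ipP (c *: x + y) z = c * ipP x z + ipP y z.
Proof. move=> c [x1 x2] [y1 y2] [z1 z2]; rewrite /ipP /= !hD. ring. Qed.
Lemma pC : forall x y : (H * K)%type, ipP y x = (ipP x y)^*.
Proof. move=> [x1 x2] [y1 y2]; by rewrite /ipP /= (hC x1 y1) (hC x2 y2) rmorphD. Qed.
Lemma pP : forall x : (H * K)%type, 0 <= ipP x x.
Proof. by move=> x; rewrite addr_ge0 // hP. Qed.
Lemma pDef : forall x : (H * K)%type, ipP x x = 0 -> x = 0.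
Proof.
move=> [x1 x2]; rewrite /ipP /= => /eqP; rewrite paddr_eq0 ?hP // => /andP[/eqP h1 /eqP h2].
by rewrite (hDef _ h1) (hDef _ h2).
Qed.
Lemma n2P (p : (H * K)%type) : n2 ipP p = n2 (hinner H) p.1 + n2 (hinner K) p.2.
Proof. by rewrite /n2 /ipP ReD. Qed.

Lemma pcpl (u : nat -> (H * K)%type) : cauchyR ipP u -> exists l, cvgR ipP u l.
Proof.
move=> hu.
have c1 : cauchyR (hinner H) (fun n => (u n).1).
  move=> e e0; have [N hN] := hu e e0; exists N => m n hm hn.
  have := hN m n hm hn; rewrite n2P /=; have := n2_ge0 hP ((u m).2 - (u n).2). lra.
have c2 : cauchyR (hinner K) (fun n => (u n).2).
  move=> e e0; have [N hN] := hu e e0; exists N => m n hm hn.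
  have := hN m n hm hn; rewrite n2P /=; have := n2_ge0 hP ((u m).1 - (u n).1). lra.
have [l1 h1] := hcpl _ c1; have [l2 h2] := hcpl _ c2.
exists (l1, l2) => e e0.
have [N1 hN1] := h1 (e / 2) ltac:(lra); have [N2 hN2] := h2 (e / 2) ltac:(lra).
exists (maxn N1 N2) => n hn; rewrite n2P /=.
have := hN1 n (leq_trans (leq_maxl _ _) hn); have := hN2 n (leq_trans (leq_maxr _ _) hn).
lra.
Qed.

Lemma cvg_fst (u : nat -> (H * K)%type) l : cvgR ipP u l -> cvgR (hinner H) (fun n => (u n).1) l.1.
Proof.
move=> h e e0; have [N hN] := h e e0; exists N => n hn.
have := hN n hn; rewrite n2P /=; have := n2_ge0 hP ((u n).2 - l.2). lra.
Qed.
Lemma cvg_snd (u : nat -> (H * K)%type) l : cvgR ipP u l -> cvgR (hinner K) (fun n => (u n).2) l.2.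
Proof.
move=> h e e0; have [N hN] := h e e0; exists N => n hn.
have := hN n hn; rewrite n2P /=; have := n2_ge0 hP ((u n).1 - l.1). lra.
Qed.

Definition graph (domT : H -> Prop) (T : H -> K) (p : (H * K)%type) := domT p.1 /\ T p.1 = p.2.

Lemma graph_sub domT T : is_operator domT T -> subsp (graph domT T).
Proof.
move=> [d0 dD TD]; split.
  split => //=; have := TD 1 0 0 d0 d0; rewrite !scale1r addr0 => h.
  by apply: (addrI (T 0)); rewrite addr0 -h.
move=> c [x1 x2] [y1 y2] [/= dx <-] [/= dy <-]; split => /=; first exact: dD.
exact: TD.
Qed.

Lemma graph_closed domT T : closed_operator domT T -> closedR ipP (graph domT T).
Proof.
move=> cl u l Su hul.
have c1 := cvg_to (cvg_fst _ _ hul); have c2 := cvg_to (cvg_snd _ _ hul).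
have e : (fun n => T (u n).1) = (fun n => (u n).2).
  by apply: functional_extensionality => n; case: (Su n).
have := cl (fun n => (u n).1) l.1 l.2 (fun n => (Su n).1) c1; rewrite e => h.
exact: h c2.
Qed.

Lemma von_neumann domT (T : H -> K) v w :
  is_operator domT T -> closed_operator domT T ->
  (forall s r, adjoint_graph domT T s r -> hinner H r v = hinner K s w) ->
  domT v /\ T v = w.
Proof.
move=> op cl hyp.
have [k [Sk ok]] := projection pD pC pP pcpl (graph domT T) (graph_sub _ _ op) (graph_closed _ _ cl) (v, w).
set p := v - k.1; set q := w - k.2.
have orth : forall x, domT x -> hinner H p x + hinner K q (T x) = 0.
  by move=> x dx; have := ok (x, T x) (conj dx erefl).
have adj : adjoint_graph domT T q (- p).
  move=> x dx; rewrite (hC q (T x)) (ipNr hD hC).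
  have : hinner K q (T x) = - hinner H p x by apply/eqP; rewrite -addr_eq0 addrC orth.
  by move=> ->; rewrite rmorphN (hC p x).
have h1 := hyp _ _ adj; rewrite (ipNl hD) in h1.
have h0 : ipP (p, q) (p, q) = 0.
  rewrite /ipP /= {2}/p {2}/q (ipBr hD hC) (ipBr hD hC) -h1.
  have := orth k.1 Sk.1; rewrite Sk.2 => o.
  apply/eqP; rewrite -subr_eq0; apply/eqP. 
  have : hinner H p v - hinner H p k.1 + (- hinner H p v - hinner K q k.2) = - (hinner H p k.1 + hinner K q k.2) by ring.
  by move=> ->; rewrite o oppr0 addr0.
have := pDef _ h0; case=> /eqP hp /eqP hq.
move: hp hq; rewrite /p /q !subr_eq0 => /eqP -> /eqP ->.
by case: Sk.
Qed.
End Prod.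

Arguments von_neumann {R H K domT T v w}.
Arguments ip_small {R V ip}.
Arguments ipP {R H K}.
Arguments pcpl {R H K}.
Arguments pD {R H K}. Arguments pC {R H K}. Arguments pP {R H K}. Arguments pDef {R H K}. Arguments n2P {R H K}.

Section Op.
Variable R : realType.
Variables H K : hilbert R.
Variable domT : H -> Prop.
Variable T : H -> K.
Hypothesis op : is_operator domT T.
Lemma op0 : domT 0. Proof. by case: op. Qed.
Lemma opD x y : domT x -> domT y -> domT (x + y).
Proof. by case: op => _ dD _ dx dy; rewrite -[x]scale1r; apply: dD. Qed.
Lemma opB x y : domT x -> domT y -> domT (x - y).
Proof. by case: op => _ dD _ dx dy; rewrite addrC -scaleN1r; apply: dD. Qed.
Lemma opTD x y : domT x -> domT y -> T (x + y) = T x + T y.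
Proof. by case: op => _ _ TD dx dy; have := TD 1 x y dx dy; rewrite !scale1r. Qed.
Lemma opTB x y : domT x -> domT y -> T (x - y) = T x - T y.
Proof. case: op => _ _ TD dx dy; have := TD (-1) y x dy dx; rewrite !scaleN1r => h. by rewrite addrC h addrC. Qed.
End Op.
Arguments op0 {R H K domT T}. Arguments opD {R H K domT T}. Arguments opB {R H K domT T}.
Arguments opTD {R H K domT T}. Arguments opTB {R H K domT T}.

Theorem proposition2p11 (R : realType) (H0 H1 : hilbert R)
    (domG : H0 -> Prop) (G : H0 -> H1) (domD : H1 -> Prop) (D : H1 -> H0)
    (a : H1 -> H1) (m : H0 -> H0) (u0 : H0) :
  densely_defined_closed domG G ->
  densely_defined_closed domD D ->
  neg_adjoint_sub domG G domD D ->
  coercive a -> coercive m ->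
  BD domG G domD D u0 ->
  exists! u : H0,
    dom_DaG domG G domD a u /\
    m u - D (a (G u)) = 0 /\
    dom_Gring domD D (u - u0).
Proof.
move=> [opG _ clG] [opD' _ clD] negsub ca cm [du0 _].
have [aL [[Ka [Ka0 aB]] [mua [mua0 aC]]]] := coer_conv ca.
have [mL [[Km [Km0 mB]] [mum [mum0 mC]]]] := coer_conv cm.
have stepA : forall v z, adjoint_graph domD D v z -> domG v /\ G v = - z.
  move=> v z hvz; apply: (von_neumann opG clG) => s r hsr.
  have [ds Ds] := negsub s r hsr.
  have := hvz s ds; rewrite Ds (ipNl hD) => h.
  by rewrite (ipNr hD hC) -h opprK.
pose S := fun p : (H0 * H1)%type => adjoint_graph domD D p.1 (- p.2).
have subS : subsp S.
  split.
    by move=> y dy /=; rewrite oppr0 !(ip0r hD hC).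
  move=> c [x1 x2] [y1 y2] hx hy y dy /=.
  rewrite opprD -scalerN (ipDr hD hC) (ipZr hD hC) hx // hy //.
  by rewrite (ipDr hD hC) (ipZr hD hC).
have clS : closedR ipP S.
  move=> u l Su hul y dy.
  have z0 : ipP l (D y, y) = 0.
    apply: (ip_small pD pC pP (D y, y)) => e e0.
    have [N hN] := hul e e0.
    exists (l - u N); split; first by rewrite -(n2N pD pC) opprB; apply: hN.
    rewrite (ipBl pD).
    have : ipP (u N) (D y, y) = 0.
      rewrite /ipP /= (hC (D y) (u N).1) (hC y (u N).2) (Su N y dy) (ipNr hD hC).
      by rewrite -rmorphD addNr rmorph0.
    by move=> ->; rewrite subr0.
  move: z0; rewrite /ipP /= (hC (D y) l.1) (hC y l.2) -rmorphD => /eqP.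
  rewrite conjC_eq0 addr_eq0 => /eqP ->.
  by rewrite (ipNr hD hC).
pose B := fun p : (H0 * H1)%type => (m p.1, a p.2).
have BL : forall c x y, B (c *: x + y) = c *: B x + B y.
  by move=> c [x1 x2] [y1 y2]; rewrite /B /= mL aL.
have BM : forall x, n2 ipP (B x) <= (Km + Ka) * n2 ipP x.
  move=> [x1 x2]; rewrite !n2P /=.
  have := mB x1; have := aB x2; have := n2_ge0 hP x1; have := n2_ge0 hP x2. nra.
set mu := Num.min mum mua.
have mu0 : 0 < mu by rewrite lt_min mum0 mua0.
have mu1 : mu <= mum by rewrite ge_min lexx.
have mu2 : mu <= mua by rewrite ge_min lexx orbT.
have BC : forall x, mu * n2 ipP x <= complex.Re (ipP (B x) x).
  move=> [x1 x2]; rewrite n2P /ipP /= ReD.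
  have := mC x1; have := aC x2; have := n2_ge0 hP x1; have := n2_ge0 hP x2. nra.
have [P [SP oP]] := lax_milgram pD pC pP pDef pcpl S B (Km + Ka) mu subS clS BL
  ltac:(lra) BM mu0 BC (- B (u0, G u0)).
case: P SP oP => w g SP oP.
have [dw Gw] := stepA _ _ SP; rewrite opprK in Gw.
set u := u0 + w.
have du : domG u by apply: (opD opG).
have Gu : G u = G u0 + g by rewrite /u (opTD opG) // Gw.
have eqw : u - u0 = w by rewrite /u addrAC subrr add0r.
have weak : forall s r, adjoint_graph domD D s r ->
    hinner H1 r (a (G u)) = hinner H0 s (m u).
  move=> s r hsr.
  have Ss : S (s, - r) by rewrite /S /= opprK.
  have := oP _ Ss.
  have -> : - B (u0, G u0) - B (w, g) = - (m u, a (G u)).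
    by rewrite -opprD -(BlinD _ _ _ BL) /B /= Gu.
  rewrite (ipNl pD) /ipP /= (ipNr hD hC) => /eqP; rewrite oppr_eq0 addr_eq0 => /eqP h.
  rewrite (hC (a (G u)) r) (hC (m u) s). 
  by rewrite h opprK.
have [dD' Deq] := von_neumann opD' clD weak.
exists u; split.
  split; first by split.
  split; first by rewrite Deq subrr.
  by exists (- g); rewrite eqw.
move=> u' [[du' dD'2] [eq' [z' hz']]].
have Sp : S (u' - u0, - z') by rewrite /S /= opprK.
have Sd : S ((u' - u0, - z') - (w, g)).
  case: subS => _ SD; have := SD (-1) (w, g) (u' - u0, - z') SP Sp; by rewrite scaleN1r addrC.
set dd := u' - u0 - w.
set zz := - (- z' - g).
have Sdd : adjoint_graph domD D dd zz by exact: Sd.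
have [ddG Gdd] := stepA _ _ Sdd.
have ddE : dd = u' - u by rewrite /dd /u opprD addrA.
have Deq' : D (a (G u')) = m u' by move/eqP: eq'; rewrite subr_eq0 => /eqP <-.
have da : domD (a (G dd)).
  rewrite ddE (opTB opG) //.
  rewrite (BB _ _ _ aL).
  exact: (opB opD').
have mdd : m dd = D (a (G dd)).
  rewrite ddE (opTB opG) //.
  rewrite (BB _ _ _ aL) (opTB opD') // Deq' Deq.
  by rewrite (BB _ _ _ mL).
have key : hinner H0 (m dd) dd = - hinner H1 (a (G dd)) (G dd).
  rewrite mdd Sdd //.
  have -> : zz = - G dd by rewrite Gdd opprK.
  by rewrite (ipNr hD hC).
have c1 := mC dd; rewrite key ReN in c1.
have c2 := aC (G dd).
have c3 := n2_ge0 hP (G dd); have c4 := n2_ge0 hP dd.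
have n0 : n2 (hinner H0) dd = 0 by nra.
have := n2_eq0 hP hDef _ n0; rewrite ddE => /eqP; rewrite subr_eq0 => /eqP.
by move=> ->.
Qed.
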